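(* Let $\bm{w},\bm{v}$ be two unit vectors in $\mathbb{R}^d$ and $\bm{U}$ a linear subspace of $\mathbb{R}^d$, and assume that $\bm{w}$ and $\bm{v}$ do not both lie in $\bm{U}$. Then $\sin\theta(\mathrm{span}(\bm{U},\bm{w}),\mathrm{span}(\bm{U},\bm{v}))\le\frac{\sin\theta(\bm{w},\bm{v})}{\max\{\sin\theta(\bm{w},\bm{U}),\sin\theta(\bm{v},\bm{U})\}}$.
   Context: $\theta(\bm{x},\bm{y})$ is the angle between nonzero vectors; for a vector $\bm{x}$ and subspace $\bm{U}$, $\theta(\bm{x},\bm{U})=\min_{\bm{u}\in\bm{U}}\theta(\bm{x},\bm{u})$; for subspaces $\bm{U},\bm{V}$, $\theta(\bm{U},\bm{V})=\max_{\bm{u}\in\bm{U}}\theta(\bm{u},\bm{V})$. *)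

(* Defs.v *)
From HB Require Import structures.
From mathcomp Require Import all_boot all_order all_algebra.
From mathcomp Require Import all_classical all_reals all_analysis.
Set Implicit Arguments. Unset Strict Implicit. Unset Printing Implicit Defensive.
Import Order.TTheory GRing.Theory Num.Theory.
Local Open Scope classical_set_scope.
Local Open Scope ring_scope.

(* Vectors of R^d are row vectors 'rV[R]_d; a linear subspace of R^d is the
   row space of a matrix U : 'M[R]_d (membership: (u <= U)%MS). *)

Definition dotv {R : realType} {d : nat} (x y : 'rV[R]_d) : R := (x *m y^T) 0 0.
Definition normv {R : realType} {d : nat} (x : 'rV[R]_d) : R := Num.sqrt (dotv x x).

Definition vangle {R : realType} {d : nat} (x y : 'rV[R]_d) : R :=
  acos (dotv x y / (normv x * normv y)).

Definition nzvecs {R : realType} {d : nat} (U : 'M[R]_d) : set 'rV[R]_d :=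
  [set u | (u <= U)%MS /\ u != 0].

Definition vsangle {R : realType} {d : nat} (x : 'rV[R]_d) (U : 'M[R]_d) : R :=
  if \rank U == 0%N then pi / 2 else inf [set vangle x u | u in nzvecs U].

Definition ssangle {R : realType} {d : nat} (U V : 'M[R]_d) : R :=
  sup [set vsangle u V | u in nzvecs U].

(* Main.v *)
Require Import Defs.
From HB Require Import structures.
From mathcomp Require Import all_boot all_order all_algebra.
From mathcomp Require Import all_classical all_reals all_analysis.
From mathcomp Require Import ring lra.
Import Order.TTheory GRing.Theory Num.Theory.
Local Open Scope classical_set_scope.
Local Open Scope ring_scope.
Set Implicit Arguments. Unset Strict Implicit.

Section Dot.
Variables (R : realType) (d : nat).
Implicit Types x y z : 'rV[R]_d.

Lemma dotE x y : dotv x y = \sum_j x 0 j * y 0 j.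
Proof. by rewrite /dotv !mxE; apply: eq_bigr => j _; rewrite mxE. Qed.

Lemma dotC x y : dotv x y = dotv y x.
Proof. by rewrite !dotE; apply: eq_bigr => j _; rewrite mulrC. Qed.

Lemma dotDl x y z : dotv (x + y) z = dotv x z + dotv y z.
Proof. by rewrite !dotE -big_split; apply: eq_bigr => j _; rewrite mxE mulrDl. Qed.

Lemma dotZl a x y : dotv (a *: x) y = a * dotv x y.
Proof. by rewrite !dotE mulr_sumr; apply: eq_bigr => j _; rewrite mxE mulrA. Qed.

Lemma dotNl x y : dotv (- x) y = - dotv x y.
Proof. by rewrite -scaleN1r dotZl mulN1r. Qed.

Lemma dotBl x y z : dotv (x - y) z = dotv x z - dotv y z.
Proof. by rewrite dotDl dotNl. Qed.

Lemma dotDr x y z : dotv z (x + y) = dotv z x + dotv z y.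
Proof. by rewrite dotC dotDl !(dotC z). Qed.

Lemma dotZr a x y : dotv y (a *: x) = a * dotv y x.
Proof. by rewrite dotC dotZl dotC. Qed.

Lemma dotBr x y z : dotv z (x - y) = dotv z x - dotv z y.
Proof. by rewrite dotC dotBl !(dotC z). Qed.

Lemma dot0l x : dotv 0 x = 0.
Proof. by rewrite -(scale0r 0) dotZl mul0r. Qed.

Lemma dot0r x : dotv x 0 = 0.
Proof. by rewrite dotC dot0l. Qed.

Lemma dot_ge0 x : 0 <= dotv x x.
Proof. by rewrite dotE; apply: sumr_ge0 => j _; rewrite -expr2 sqr_ge0. Qed.

Lemma dot_eq0 {x} : dotv x x = 0 -> x = 0.
Proof.
rewrite dotE => /eqP; rewrite psumr_eq0 => [/allP H|j _]; last by rewrite -expr2 sqr_ge0.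
apply/matrixP => i j; rewrite ord1 mxE.
have := H j (mem_index_enum j); rewrite /= mulf_eq0 orbb => /eqP ->//.
Qed.

Lemma normv_ge0 x : 0 <= normv x.
Proof. exact: sqrtr_ge0. Qed.

Lemma normv_sqr x : normv x ^+ 2 = dotv x x.
Proof. by rewrite sqr_sqrtr // dot_ge0. Qed.

Lemma CS x y : dotv x y ^+ 2 <= dotv x x * dotv y y.
Proof.
have [y0|yn0] := eqVneq (dotv y y) 0.
  by rewrite (dot_eq0 y0) !dot0r mulr0 expr0n.
have yp : 0 < dotv y y by rewrite lt_neqAle eq_sym yn0 dot_ge0.
have := dot_ge0 (dotv y y *: x - dotv x y *: y).
rewrite !(dotBl, dotBr, dotZl, dotZr) (dotC y x) => H.
rewrite -subr_ge0; have : 0 <= dotv y y * (dotv x x * dotv y y - dotv x y ^+ 2).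
  by move: H; congr (_ <= _); ring.
by rewrite pmulr_rge0.
Qed.

End Dot.


Section Proj.
Variables (R : realType) (d : nat) (U : 'M[R]_d).

Let B := row_base U.
Let G := B *m B^T.

Definition projU (w : 'rV[R]_d) := w *m B^T *m invmx G *m B.

Lemma dot_mx (x y : 'rV[R]_d) : dotv x y = (x *m y^T) 0 0.
Proof. by []. Qed.

Lemma G_unit : G \in unitmx.
Proof.
rewrite -row_free_unit; apply: inj_row_free => z Hz.
have : dotv (z *m B) (z *m B) = 0.
  by rewrite dot_mx trmx_mul mulmxA -(mulmxA z) -/G Hz mul0mx mxE.
move/dot_eq0/eqP; rewrite mulmx_free_eq0 ?row_base_free //; exact/eqP.
Qed.

Lemma projU_sub w : (projU w <= U)%MS.
Proof. by rewrite /projU -(eq_row_base U) submxMl. Qed.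

Lemma projU_orth w u : (u <= U)%MS -> dotv (w - projU w) u = 0.
Proof.
rewrite -(eq_row_base U) => /submxP [z ->].
have H : (w - projU w) *m B^T = 0.
  rewrite mulmxBl /projU -(mulmxA (w *m B^T *m invmx G)) -/G mulmxKV ?G_unit //.
  by rewrite subrr.
by rewrite dot_mx trmx_mul mulmxA -/B H mul0mx mxE.
Qed.

End Proj.
Arguments projU {R d}.
Arguments projU_sub {R d}.
Arguments projU_orth {R d U}.


Section Trig.
Variable R : realType.

Lemma acos_anti (x y : R) : -1 <= x -> x <= y -> y <= 1 -> acos y <= acos x.
Proof.
move=> h1 h2 h3.
have hx : -1 <= x <= 1 by rewrite h1 (le_trans h2 h3).
have hy : -1 <= y <= 1 by rewrite h3 andbT (le_trans h1 h2).
rewrite leNgt; apply/negP => H.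
have := H; rewrite -ltr_cos ?in_itv /= ?acos_ge0 ?acos_lepi // !acosK ?in_itv //.
by rewrite ltNge h2.
Qed.

Lemma cos_anti (s b : R) : 0 <= s -> s <= b -> b <= pi -> cos b <= cos s.
Proof.
move=> h1 h2 h3; rewrite leNgt ltr_cos ?in_itv /= ?h1 ?(le_trans h2 h3) //.
  by rewrite -leNgt.
by rewrite (le_trans h1 h2).
Qed.

End Trig.

Section Vang.
Variables (R : realType) (d : nat).
Implicit Types x y : 'rV[R]_d.

Lemma CS_abs x y : `|dotv x y| <= normv x * normv y.
Proof.
rewrite /normv -sqrtrM ?dot_ge0 // -sqrtr_sqr ler_sqrt ?mulr_ge0 ?dot_ge0 //.
exact: CS.
Qed.

Lemma normv_gt0 x : x != 0 -> 0 < normv x.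
Proof.
move=> hx; rewrite sqrtr_gt0 lt_neqAle dot_ge0 andbT eq_sym.
by apply/eqP => /dot_eq0 h; rewrite h eqxx in hx.
Qed.

Lemma ratio_bd x y : x != 0 -> y != 0 ->
  -1 <= dotv x y / (normv x * normv y) <= 1.
Proof.
move=> hx hy; have hp : 0 < normv x * normv y by rewrite mulr_gt0 ?normv_gt0.
have := CS_abs x y; rewrite ler_norml => /andP [h1 h2].
rewrite ler_pdivlMr // ler_pdivrMr // mulN1r h1 mul1r h2 //.
Qed.

Lemma vangle_ge0 x y : x != 0 -> y != 0 -> 0 <= vangle x y.
Proof. by move=> hx hy; rewrite /vangle acos_ge0 // ratio_bd. Qed.

Lemma normv0 : normv (0 : 'rV[R]_d) = 0.
Proof. by rewrite /normv dot0l sqrtr0. Qed.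

Lemma vsangle_ge0 x (V : 'M[R]_d) : x != 0 -> 0 <= vsangle x V.
Proof.
move=> hx; rewrite /vsangle; case: ifP => hr.
  by rewrite divr_ge0 ?pi_ge0.
have [i Hi] : exists i, row i V != 0.
  case/boolP: [exists i, row i V != 0] => [/existsP //|/existsPn H].
  move: hr; rewrite mxrank_eq0 => /negP; case; apply/eqP/row_matrixP => i.
  by have := H i; rewrite negbK row0 => /eqP.
apply: lb_le_inf.
  by exists (vangle x (row i V)), (row i V) => //; split => //; exact: row_sub.
by move=> _ [u [_ hu] <-]; exact: vangle_ge0.
Qed.

Lemma vsangle_eq (w : 'rV[R]_d) (U : 'M[R]_d) : normv w = 1 ->
  vsangle w U = acos (normv (projU U w)).
Proof.
move=> hw; set p := projU U w.
have hpU : (p <= U)%MS := projU_sub U w.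
have hdot u : (u <= U)%MS -> dotv w u = dotv p u.
  by move=> /(projU_orth w); rewrite dotBl => /eqP; rewrite subr_eq0 => /eqP.
clearbody p.
have hww : dotv w w = 1 by rewrite -normv_sqr hw expr1n.
have hpp : dotv p p <= 1.
  have e1 : dotv w p = dotv p p := hdot p hpU.
  have e2 : dotv p w = dotv p p by rewrite dotC.
  have := dot_ge0 (w - p); rewrite dotBl !dotBr e1 e2 hww; lra.
have c1 : normv p <= 1.
  by rewrite /normv -sqrtr1 ler_sqrt.
have c0 : 0 <= normv p := normv_ge0 p.
rewrite /vsangle; case: ifP => hr.
  move: hr; rewrite mxrank_eq0 => /eqP hU.
  have -> : p = 0 by apply/eqP; rewrite -submx0 -hU.
  by rewrite normv0 acos0.
have [i Hi] : exists i, row i U != 0.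
  case/boolP: [exists i, row i U != 0] => [/existsP //|/existsPn H].
  move: hr; rewrite mxrank_eq0 => /negP; case; apply/eqP/row_matrixP => i.
  by have := H i; rewrite negbK row0 => /eqP.
have lb : lbound [set vangle w u | u in nzvecs U] (acos (normv p)).
  move=> _ [u [hu hu0] <-]; rewrite /vangle hw mul1r hdot //.
  have hn := normv_gt0 hu0.
  have := CS_abs p u; rewrite ler_norml => /andP [h1 h2].
  apply: acos_anti => //.
  - by rewrite ler_pdivlMr // mulN1r (le_trans _ h1) // lerN2 ler_piMl ?normv_ge0.
  - by rewrite ler_pdivrMr.
apply/eqP; rewrite eq_le; apply/andP; split; last first.
  apply: lb_le_inf => //.
  by exists (vangle w (row i U)), (row i U) => //; split => //; exact: row_sub.
apply: ge_inf; first by exists (acos (normv p)).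
have [p0|pn0] := eqVneq p 0.
  exists (row i U); first by split => //; exact: row_sub.
  by rewrite /vangle hdot ?row_sub // p0 dot0l mul0r normv0.
exists p; first by split.
rewrite /vangle hdot // hw mul1r -normv_sqr expr2 mulfK //.
by rewrite gt_eqF // normv_gt0.
Qed.

End Vang.


Section Main.
Variables (R : realType) (d : nat).

Lemma sub_decomp (x w : 'rV[R]_d) (U : 'M[R]_d) : (x <= U + w)%MS ->
  exists u0 a, (u0 <= U)%MS /\ x = u0 + a *: w.
Proof.
move=> /sub_addsmxP [[u1 u2] /= ->].
have /sub_rVP [a ->] : (u2 *m w <= w)%MS by exact: submxMl.
by exists (u1 *m U), a; split => //; exact: submxMl.
Qed.

Lemma key_ineq (w v : 'rV[R]_d) (U : 'M[R]_d) (s : R) :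
  dotv ((w - projU U w) - s *: (v - projU U v)) ((w - projU U w) - s *: (v - projU U v))
   <= dotv (w - s *: v) (w - s *: v).
Proof.
set w' := w - projU U w; set v' := v - projU U v.
set z := projU U w - s *: projU U v.
have hz : (z <= U)%MS.
  by rewrite addmx_sub ?projU_sub // -scaleNr scalemx_sub ?projU_sub.
have e : w - s *: v = z + (w' - s *: v').
  by apply/matrixP => i j; rewrite /z /w' /v' !mxE; ring.
have o : dotv (w' - s *: v') z = 0.
  by rewrite dotBl dotZl /w' /v' !projU_orth // mulr0 subrr.
set b := w' - s *: v' in o e *.
clearbody b z; rewrite e dotDl !dotDr o (dotC z b) o addr0 add0r lerDr; exact: dot_ge0.
Qed.

End Main.

Lemma sin_vsangle (R : realType) (d : nat) (U : 'M[R]_d) (w : 'rV[R]_d) :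
  normv w = 1 -> sin (vsangle w U) = normv (w - projU U w).
Proof.
move=> hw; rewrite vsangle_eq //.
have hpU := projU_sub U w; have ow := projU_orth (U:=U) w.
move: (projU U w) hpU ow => p hpU ow.
have e : w = p + (w - p) by rewrite addrC subrK.
have hww : dotv w w = 1 by rewrite -normv_sqr hw expr1n.
have o1 : dotv (w - p) p = 0 := ow p hpU.
have hsum : dotv w w = dotv p p + dotv (w - p) (w - p).
  move: (w - p) o1 e => b o1 e; rewrite {1 2}e dotDl !dotDr o1 (dotC p b) o1; ring.
have hb := dot_ge0 (w - p).
have hp2 : normv p ^+ 2 = dotv p p := normv_sqr p.
have hp0 := normv_ge0 p.
have hp1 : normv p <= 1 by nra.
rewrite sin_acos; last by rewrite hp1 andbT (le_trans _ hp0) // lerN10.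
by rewrite /normv hp2; congr Num.sqrt; lra.
Qed.

Local Open Scope classical_set_scope.
Local Open Scope ring_scope.

Unset Implicit Arguments. Set Strict Implicit.

Theorem lemma10 (R : realType) (d : nat) (w v : 'rV[R]_d) (U : 'M[R]_d)
  (hw : normv w = 1) (hv : normv v = 1)
  (hnot : ~ ((w <= U)%MS /\ (v <= U)%MS)) :
  sin (ssangle (U + w)%MS (U + v)%MS) <=
    sin (vangle w v) / Num.max (sin (vsangle w U)) (sin (vsangle v U)).
Proof.
rewrite (sin_vsangle U hw) (sin_vsangle U hv).
have hww : dotv w w = 1 by rewrite -normv_sqr hw expr1n.
have hvv : dotv v v = 1 by rewrite -normv_sqr hv expr1n.
have w0 : w != 0 by apply/eqP => h; move: hw; rewrite h normv0 => /eqP; rewrite eq_sym oner_eq0.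
have v0 : v != 0 by apply/eqP => h; move: hv; rewrite h normv0 => /eqP; rewrite eq_sym oner_eq0.
rewrite /vangle hw hv mul1r divr1.
have hc : -1 <= dotv w v <= 1.
  by have := CS_abs w v; rewrite hw hv mul1r ler_norml.
rewrite sin_acos //.
have [c hcE] : exists c, dotv w v = c by eexists.
rewrite hcE in hc *.
have hS0 : 0 <= Num.sqrt (1 - c ^+ 2) := sqrtr_ge0 _.
have hS2 : Num.sqrt (1 - c ^+ 2) ^+ 2 = 1 - c ^+ 2 by rewrite sqr_sqrtr //; nra.
move: (Num.sqrt (1 - c ^+ 2)) hS0 hS2 => S hS0 hS2.
have hE1 : dotv (w - c *: v) (w - c *: v) = 1 - c ^+ 2.
  by rewrite !(dotBl, dotBr, dotZl, dotZr) hww hvv (dotC v w) hcE; ring.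
have hE2 : dotv (v - c *: w) (v - c *: w) = 1 - c ^+ 2.
  by rewrite !(dotBl, dotBr, dotZl, dotZr) hww hvv (dotC v w) hcE; ring.
have key1 := key_ineq w v U c; have key2 := key_ineq v w U c.
rewrite hE1 in key1; rewrite hE2 in key2.
have hpU := projU_sub U w; have hqU := projU_sub U v.
have ow := projU_orth (U:=U) w; have ov := projU_orth (U:=U) v.
move: (projU U w) (projU U v) hpU hqU ow ov key1 key2 => p q hpU hqU ow ov key1 key2.
have [w' hw'] : exists w', w - p = w' by eexists.
have [v' hv'] : exists v', v - q = v' by eexists.
rewrite hw' in ow key1 key2 *; rewrite hv' in ov key1 key2 *.
have hnz : w' != 0 \/ v' != 0.
  case: (eqVneq w' 0) => [hw0|]; last by left.
  case: (eqVneq v' 0) => [hv0|]; last by right.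
  exfalso; apply: hnot; split.
  - by have := subr0_eq (etrans hw' hw0) => ->.
  - by have := subr0_eq (etrans hv' hv0) => ->.
set a1 := dotv w' w'; set b1 := dotv v' v'; set k := dotv w' v'.
have ha1 : 0 <= a1 := dot_ge0 w'.
have hb1 : 0 <= b1 := dot_ge0 v'.
have E1 : a1 - 2 * c * k + c ^+ 2 * b1 <= S ^+ 2.
  by move: key1; rewrite !(dotBl, dotBr, dotZl, dotZr) (dotC v' w') hS2 -/a1 -/b1 -/k; lra.
have E2 : b1 - 2 * c * k + c ^+ 2 * a1 <= S ^+ 2.
  by move: key2; rewrite !(dotBl, dotBr, dotZl, dotZr) (dotC v' w') hS2 -/a1 -/b1 -/k; lra.
have D2v : a1 * b1 - k ^+ 2 <= S ^+ 2 * b1.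
  have := sqr_ge0 (c * b1 - k); nra.
have D2w : a1 * b1 - k ^+ 2 <= S ^+ 2 * a1.
  have := sqr_ge0 (c * a1 - k); nra.
have hNw2 : normv w' ^+ 2 = a1 := normv_sqr w'.
have hNv2 : normv v' ^+ 2 = b1 := normv_sqr v'.
have hNw0 := normv_ge0 w'; have hNv0 := normv_ge0 v'.
move: (normv w') (normv v') hNw2 hNv2 hNw0 hNv0 => Nw Nv hNw2 hNv2 hNw0 hNv0.
have hMpos : 0 < Num.max Nw Nv.
  case: hnz => h.
  - have ha : a1 != 0 by apply/eqP => /dot_eq0 h0; rewrite h0 eqxx in h.
    have : 0 < Nw by rewrite lt_neqAle hNw0 andbT eq_sym; apply/eqP => h0;
      move: ha; rewrite -hNw2 h0 expr0n eqxx.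
    by move=> h1; rewrite lt_max h1.
  - have hb : b1 != 0 by apply/eqP => /dot_eq0 h0; rewrite h0 eqxx in h.
    have : 0 < Nv by rewrite lt_neqAle hNv0 andbT eq_sym; apply/eqP => h0;
      move: hb; rewrite -hNv2 h0 expr0n eqxx.
    by move=> h1; rewrite lt_max h1 orbT.
have [hMS|hMS] := lerP (Num.max Nw Nv) S.
  by apply: le_trans (sin_le1 _) _; rewrite ler_pdivlMr // mul1r.
have hb1p : 0 < b1.
  rewrite lt_neqAle hb1 andbT eq_sym; apply/eqP => hb0.
  have hk : k = 0 by rewrite /k; move: hb0 => /dot_eq0 ->; rewrite dot0r.
  have hNv : Nv = 0 by move: hNv2; rewrite hb0 => /eqP; rewrite sqrf_eq0 => /eqP.
  have : Nw <= S by rewrite hk hb0 in E1; nra.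
  by move=> h; move: hMS; rewrite ltNge ge_max h hNv hS0.
set M := Num.max Nw Nv in hMpos hMS *.
have hMcase : M = Nw \/ M = Nv by rewrite /M maxEle; case: ifP; [right|left].
set B := S / M.
have hB0 : 0 <= B by rewrite divr_ge0 // ltW.
have hB1 : B < 1 by rewrite ltr_pdivrMr // mul1r.
have hK2 : Num.sqrt (1 - B ^+ 2) ^+ 2 = 1 - B ^+ 2 by rewrite sqr_sqrtr //; nra.
have hK0 : 0 <= Num.sqrt (1 - B ^+ 2) := sqrtr_ge0 _.
move: (Num.sqrt (1 - B ^+ 2)) hK2 hK0 => K hK2 hK0.
have hK1 : K <= 1 by nra.
have hKi : -1 <= K <= 1 by rewrite hK1 andbT (le_trans _ hK0) // lerN10.
have hb0 : 0 <= acos K := acos_ge0 hKi.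
have hbpi : acos K <= pi := acos_lepi hKi.
have hcosb : cos (acos K) = K by rewrite acosK // in_itv.
have claim : forall x, nzvecs (U + w)%MS x -> vsangle x (U + v)%MS <= acos K.
  move=> x [hx hx0].
  have [u0 [a [hu0 ex]]] := sub_decomp hx.
  have hq0 : ((u0 + a *: p)%R <= U)%MS by rewrite addmx_sub // scalemx_sub.
  have [q0 hq0E] : exists q0, u0 + a *: p = q0 by eexists.
  rewrite hq0E in hq0.
  have ex' : x = q0 + a *: w'.
    by rewrite ex -hq0E -hw'; apply/matrixP => i j; rewrite !mxE; ring.
  have [t ht] : exists t, k / b1 = t by eexists.
  have [e he] : exists e, w' - t *: v' = e by eexists.
  have [y hyE] : exists y, q0 + (a * t) *: v' = y by eexists.
  have hy : (y <= U + v)%MS.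
    have -> : y = (q0 - (a * t) *: q) + (a * t) *: v.
      by rewrite -hyE -hv'; apply/matrixP => i j; rewrite !mxE; ring.
    apply: addmx_sub_adds; last exact: scalemx_sub.
    by rewrite addmx_sub // -scaleNr scalemx_sub.
  have hxy : x = y + a *: e.
    by rewrite ex' -hyE -he; apply/matrixP => i j; rewrite !mxE; ring.
  have oeU u : (u <= U)%MS -> dotv e u = 0.
    by move=> hu; rewrite -he dotBl dotZl ow // ov // mulr0 subr0.
  have oev : dotv e v' = 0.
    by rewrite -he dotBl dotZl -/k -/b1 -ht divfK ?subrr // gt_eqF.
  have oey : dotv e y = 0.
    by rewrite -hyE dotDr dotZr oeU // oev mulr0 addr0.
  have hee : b1 * dotv e e = a1 * b1 - k ^+ 2.
    rewrite -he !(dotBl, dotBr, dotZl, dotZr) (dotC v' w') -/a1 -/b1 -/k -ht.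
    by field; rewrite gt_eqF.
  have hee0 : 0 <= dotv e e := dot_ge0 e.
  have hxx : dotv x x = dotv y y + a ^+ 2 * dotv e e.
    by rewrite hxy !(dotDl, dotDr, dotZl, dotZr) (dotC y e) oey; ring.
  have hxx2 : dotv x x = dotv q0 q0 + a ^+ 2 * a1.
    by rewrite ex' !(dotDl, dotDr, dotZl, dotZr) (dotC q0 w') ow // -/a1; ring.
  have hq00 := dot_ge0 q0.
  have H1 : M ^+ 2 * dotv e e <= S ^+ 2 * a1.
    case: hMcase => ->.
    - rewrite hNw2.
      have : b1 * (a1 * dotv e e - S ^+ 2 * a1) <= 0 by rewrite mulrBr mulrA (mulrC b1) -mulrA hee; nra.
      by rewrite pmulr_rle0 // subr_le0.
    - by rewrite hNv2 hee.
  have H2 : a ^+ 2 * dotv e e * M ^+ 2 <= S ^+ 2 * dotv x x.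
    have ha2 := sqr_ge0 a.
    rewrite hxx2; nra.
  have hxxp : 0 < dotv x x.
    by rewrite -normv_sqr exprn_gt0 // normv_gt0.
  have H3 : a ^+ 2 * dotv e e <= B ^+ 2 * dotv x x.
    rewrite /B expr_div_n [X in _ <= X]mulrAC ler_pdivlMr ?exprn_gt0 //.
  have hyy : K ^+ 2 * dotv x x <= dotv y y by rewrite hK2; nra.
  have hyyp : 0 < dotv y y.
    apply: lt_le_trans hyy; rewrite mulr_gt0 // hK2; nra.
  have y0 : y != 0 by apply/eqP => h; move: hyyp; rewrite h dot0l ltxx.
  have hr : \rank (U + v)%MS == 0%N = false.
    apply/negP; rewrite mxrank_eq0 => /eqP h0.
    have : (v <= U + v)%MS by exact: addsmxSr.
    by rewrite h0 submx0 (negPf v0).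
  rewrite /vsangle hr.
  have hlb : has_lbound [set vangle x u | u in nzvecs (U + v)%MS].
    by exists 0 => _ [u [_ hu] <-]; exact: vangle_ge0.
  apply: le_trans (ge_inf hlb (_ : _ (vangle x y))) _.
    by exists y.
  have hxyd : dotv x y = dotv y y.
    by rewrite hxy dotDl dotZl oey mulr0 addr0.
  rewrite /vangle hxyd.
  have hnx := normv_gt0 hx0; have hny := normv_gt0 y0.
  have hnx2 := normv_sqr x; have hny2 := normv_sqr y.
  move: (normv x) (normv y) hnx hny hnx2 hny2 => nx ny hnx hny hnx2 hny2.
  have -> : dotv y y / (nx * ny) = ny / nx.
    by rewrite -hny2; field; rewrite !gt_eqF.
  apply: acos_anti.
  - by rewrite (le_trans _ hK0) // lerN10.
  - rewrite ler_pdivlMr //; nra.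
  - rewrite ler_pdivrMr // mul1r; nra.
rewrite /ssangle.
set A := [set vsangle x (U + v)%MS | x in nzvecs (U + w)%MS].
have hA : A (vsangle w (U + v)%MS) by exists w => //; split => //; exact: addsmxSr.
have hle : sup A <= acos K.
  by apply: ge_sup; [exists (vsangle w (U + v)%MS) | move=> _ [x hx <-]; exact: claim].
have hge : 0 <= sup A.
  apply: le_trans (vsangle_ge0 (U + v)%MS w0) _.
  apply: ub_le_sup => //; exists (acos K) => _ [x hx <-]; exact: claim.
have hcos : K <= cos (sup A) by rewrite -hcosb; apply: cos_anti.
have hsin0 : 0 <= sin (sup A) by apply: sin_ge0_pi; rewrite hge (le_trans hle hbpi).
have hs2 := sin2cos2 (sup A).
rewrite -/B; nra.
Qed.
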